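(* Let $c_1,c_3,c_5\in\mathbb{R}$ and consider the initial value problem $$\ddot u=-(c_1u+c_3u^3+c_5u^5),\qquad u(0)=1,\quad \dot u(0)=0,$$ whose solution satisfies, for $|u|\le 1$, the time-integral relation $$t=\sqrt{\tfrac32}\int_{u^2}^{1}\frac{ds}{\sqrt{s(1-s)\,h_2(s)}},\qquad h_2(s)=(6c_1+3c_3+2c_5)+(3c_3+2c_5)s+2c_5s^2 .$$ Assume $c_5>0$, $\Delta:=3c_3^2-4c_5(4c_1+c_3+c_5)>0$ and $6c_1+3c_3+2c_5>0$, and let $s_1<s_2<0$ be the two real roots of $h_2$. Define $$k^2=\frac{s_2-s_1}{s_1(s_2-1)}.$$ Then the solution $u$ of the initial value problem satisfies $$u^2(t)=s_1+\frac{s_1(s_1-1)}{\mathrm{sn}^2\!\Big(\sqrt{\tfrac{c_5\,s_1(s_2-1)}{3}}\;t,\;k\Big)-s_1}.$$ This solution is periodic with period $$\mathbb T=\frac{4\sqrt3}{\sqrt{c_5\,s_1(s_2-1)}}\,\mathbf K(k),$$ and $u(t)$ is positive for $0\le t\le \tfrac14\mathbb T$ and for $\tfrac34\mathbb T\le t\le\mathbb T$, while it is negative for $\tfrac14\mathbb T<t<\tfrac34\mathbb T$.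
   Context: $F(\varphi,k)=\int_0^{\sin\varphi}\frac{ds}{\sqrt{(1-s^2)(1-k^2s^2)}}$ is the incomplete elliptic integral of the first kind with modulus $k$; $\mathrm{am}(\cdot,k)$ is the Jacobi amplitude ($\varphi=\mathrm{am}(s,k)$ iff $s=F(\varphi,k)$); $\mathrm{sn}(s,k)=\sin(\mathrm{am}(s,k))$ is the Jacobi sine amplitude function; $\mathbf K(k)=F(\pi/2,k)$ is the complete elliptic integral of the first kind. *)

(* Defs.v *)
From Stdlib Require Import Reals ClassicalEpsilon.
From Coquelicot Require Import Coquelicot.
Open Scope R_scope.

(* For |phi| <= PI/2 this equals int_0^{sin phi} ds/sqrt((1-s^2)(1-k^2 s^2))
   (substitution s = sin theta); the angle form is the standard extension to
   all real phi, needed so that the amplitude am is defined on all of R. *)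
Definition EllF (phi k : R) : R :=
  RInt (fun theta => / sqrt (1 - k ^ 2 * (sin theta) ^ 2)) 0 phi.

Definition am (s k : R) : R :=
  epsilon (inhabits 0) (fun phi => EllF phi k = s).

Definition sn (s k : R) : R := sin (am s k).

Definition EllK (k : R) : R := EllF (PI / 2) k.

Definition h2 (c1 c3 c5 s : R) : R :=
  (6 * c1 + 3 * c3 + 2 * c5) + (3 * c3 + 2 * c5) * s + 2 * c5 * s ^ 2.

(* Main.v *)
Require Import Defs.
From Stdlib Require Import Reals Lra ClassicalEpsilon.
From Coquelicot Require Import Coquelicot.
Open Scope R_scope.

Lemma dplus (f g : R -> R) (x a b : R) : is_derive f x a -> is_derive g x b -> is_derive (fun t => f t + g t) x (a + b).
Proof. intros H1 H2. exact (is_derive_plus f g x a b H1 H2). Qed.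
Lemma dminus (f g : R -> R) (x a b : R) : is_derive f x a -> is_derive g x b -> is_derive (fun t => f t - g t) x (a - b).
Proof. intros H1 H2. exact (is_derive_minus f g x a b H1 H2). Qed.
Lemma dmult (f g : R -> R) (x a b : R) : is_derive f x a -> is_derive g x b -> is_derive (fun t => f t * g t) x (a * g x + f x * b).
Proof. intros H1 H2. exact (is_derive_mult f g x a b H1 H2 Rmult_comm). Qed.
Lemma dcomp (f g : R -> R) (x a b : R) : is_derive f (g x) a -> is_derive g x b -> is_derive (fun t => f (g t)) x (b * a).
Proof. intros H1 H2. exact (is_derive_comp f g x a b H1 H2). Qed.
Lemma dext (f : R -> R) (x a b : R) : is_derive f x a -> a = b -> is_derive f x b.
Proof. intros H ->; exact H. Qed.

Lemma did (x : R) : is_derive (fun t : R => t) x 1.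
Proof. exact (is_derive_id (K:=R_AbsRing) x). Qed.
Lemma dconst (c x : R) : is_derive (fun _ : R => c) x 0.
Proof. exact (is_derive_const (K:=R_AbsRing) c x). Qed.

Lemma deriv_cont (f : R -> R) (df x : R) : is_derive f x df -> continuity_pt f x.
Proof.
  intros H. apply derivable_continuous_pt. exists df. apply is_derive_Reals; exact H.
Qed.

Lemma mono_le (f df : R -> R) : (forall x, is_derive f x (df x)) -> (forall x, 0 <= df x) ->
  forall x y, x <= y -> f x <= f y.
Proof.
  intros Hd Hp x y Hxy.
  destruct (MVT_gen f x y df) as [c [_ Hc]].
  - intros; apply Hd.
  - intros; eapply deriv_cont; apply Hd.
  - assert (0 <= df c * (y - x)) by (apply Rmult_le_pos; [apply Hp| lra]). lra.
Qed.

Lemma const_d0 (f : R -> R) : (forall x, is_derive f x 0) -> forall x y, f x = f y.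
Proof.
  intros Hd x y.
  destruct (MVT_gen f x y (fun _ => 0)) as [c [_ Hc]].
  - intros; apply Hd.
  - intros; eapply deriv_cont; apply Hd.
  - lra.
Qed.

Definition fe (k2 t : R) : R := / sqrt (1 - k2 * sin t ^ 2).
Definition FF (k2 p : R) : R := RInt (fe k2) 0 p.

Lemma fe_den k2 t : 0 <= k2 < 1 -> 0 < 1 - k2 * sin t ^ 2.
Proof.
  intros Hk. assert (H := sin2_cos2 t). unfold Rsqr in H.
  assert (0 <= cos t * cos t) by nra. nra.
Qed.

Lemma fe_ge1 k2 t : 0 <= k2 < 1 -> 1 <= fe k2 t.
Proof.
  intros Hk. unfold fe. assert (H := fe_den k2 t Hk).
  assert (0 <= k2 * sin t ^ 2) by (apply Rmult_le_pos; [lra | apply pow2_ge_0]).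
  assert (Hs : sqrt (1 - k2 * sin t ^ 2) <= 1).
  { apply Rle_trans with (sqrt 1); [apply sqrt_le_1_alt; lra | rewrite sqrt_1; lra]. }
  assert (0 < sqrt (1 - k2 * sin t ^ 2)) by (apply sqrt_lt_R0; lra).
  apply Rle_trans with (/ 1); [rewrite Rinv_1; lra | apply Rinv_le_contravar; lra].
Qed.

Lemma fe_le k2 t : 0 <= k2 < 1 -> fe k2 t <= / sqrt (1 - k2).
Proof.
  intros Hk. unfold fe. assert (H := fe_den k2 t Hk).
  assert (Hs1: sin t ^ 2 <= 1) by (assert (H1 := sin2_cos2 t); unfold Rsqr in H1; nra).
  assert (0 < sqrt (1 - k2)) by (apply sqrt_lt_R0; lra).
  apply Rinv_le_contravar; auto. apply sqrt_le_1_alt.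
  assert (0 <= k2 * (1 - sin t ^2)) by (apply Rmult_le_pos; lra). lra.
Qed.

Lemma fe_deriv k2 t : 0 <= k2 < 1 -> ex_derive (fe k2) t.
Proof.
  intros Hk. assert (H := fe_den k2 t Hk). unfold fe. auto_derive.
  replace (sin t * (sin t * 1)) with (sin t ^ 2) by ring.
  split; [lra|]. split; auto. apply Rgt_not_eq. apply sqrt_lt_R0. lra.
Qed.

Lemma fe_cont k2 t : 0 <= k2 < 1 -> continuous (fe k2) t.
Proof. intros Hk. apply (ex_derive_continuous (K:=R_AbsRing) (V:=R_NormedModule)). apply fe_deriv; auto. Qed.

Lemma fe_ex k2 a b : 0 <= k2 < 1 -> ex_RInt (fe k2) a b.
Proof. intros Hk. apply (ex_RInt_continuous (V:=R_CompleteNormedModule)). intros; apply fe_cont; auto. Qed.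

Lemma FF_deriv k2 x : 0 <= k2 < 1 -> is_derive (FF k2) x (fe k2 x).
Proof.
  intros Hk. unfold FF. apply (is_derive_RInt (fe k2) (fun b => RInt (fe k2) 0 b) 0 x).
  - apply filter_forall. intros b. apply (RInt_correct (V:=R_CompleteNormedModule)). apply fe_ex; auto.
  - apply fe_cont; auto.
Qed.

Lemma FF_0 k2 : FF k2 0 = 0.
Proof. unfold FF. rewrite RInt_point. reflexivity. Qed.

Lemma FF_incr k2 x y : 0 <= k2 < 1 -> x < y -> FF k2 x < FF k2 y.
Proof.
  intros Hk Hxy. apply (incr_function (FF k2) m_infty p_infty (fe k2)); simpl; auto.
  - intros; apply FF_deriv; auto.
  - intros. assert (Hf := fe_ge1 k2 x0 Hk). lra.
Qed.

Lemma FF_le k2 x y : 0 <= k2 < 1 -> FF k2 x <= FF k2 y -> x <= y.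
Proof.
  intros Hk H. destruct (Rle_or_lt x y) as [|Hl]; auto.
  apply (FF_incr k2) in Hl; auto. lra.
Qed.

Lemma FF_lt k2 x y : 0 <= k2 < 1 -> FF k2 x < FF k2 y -> x < y.
Proof.
  intros Hk H. destruct (Rlt_or_le x y) as [|Hl]; auto.
  destruct Hl as [Hl| ->]; [apply (FF_incr k2) in Hl; auto; lra | lra].
Qed.

Lemma FF_inj k2 x y : 0 <= k2 < 1 -> FF k2 x = FF k2 y -> x = y.
Proof.
  intros Hk H. apply Rle_antisym; apply (FF_le k2); auto; lra.
Qed.

Lemma FF_id_mono k2 : 0 <= k2 < 1 -> forall x y, x <= y -> FF k2 x - x <= FF k2 y - y.
Proof.
  intros Hk. apply (mono_le (fun p => FF k2 p - p) (fun p => fe k2 p - 1)).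
  - intros p. apply dminus. apply FF_deriv; auto.
    apply (dext _ _ _ _ (did p)). reflexivity.
  - intros p. assert (H := fe_ge1 k2 p Hk). lra.
Qed.

Lemma FF_surj k2 s : 0 <= k2 < 1 -> exists p, FF k2 p = s.
Proof.
  intros Hk.
  assert (H1 := FF_id_mono k2 Hk 0 (Rabs s) (Rabs_pos s)).
  assert (H2 := FF_id_mono k2 Hk (- Rabs s) 0 ltac:(assert (H:=Rabs_pos s); lra)).
  rewrite FF_0 in H1, H2.
  assert (Hs1 := Rle_abs s).
  assert (- Rabs s <= s) by (unfold Rabs in *; destruct (Rcase_abs s); lra).
  destruct (IVT_gen (FF k2) (- Rabs s) (Rabs s) s) as [p [_ Hp]].
  - intros p. eapply deriv_cont. apply FF_deriv; auto.
  - rewrite Rmin_left by lra. rewrite Rmax_right by lra. lra.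
  - exists p; auto.
Qed.

Lemma dshift (f : R -> R) c x l : is_derive f (x + c) l -> is_derive (fun y => f (y + c)) x l.
Proof.
  intros H. apply (dext _ _ (1 * l)); [| ring].
  apply (dcomp f (fun y => y + c)); auto.
  apply (dext _ _ (1 + 0)); [| ring]. apply dplus. apply did. apply dconst.
Qed.

Lemma dreflect (f : R -> R) c x l : is_derive f (c - x) l -> is_derive (fun y => f (c - y)) x (- l).
Proof.
  intros H. apply (dext _ _ ((0 - 1) * l)); [| ring].
  apply (dcomp f (fun y => c - y)); auto.
  apply dminus. apply dconst. apply did.
Qed.

Lemma fe_shift k2 t : fe k2 (t + PI) = fe k2 t.
Proof. unfold fe. rewrite neg_sin. f_equal. f_equal. ring. Qed.

Lemma fe_refl k2 t : fe k2 (PI - t) = fe k2 t.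
Proof. unfold fe. rewrite sin_PI_x. reflexivity. Qed.

Lemma FF_shift k2 p : 0 <= k2 < 1 -> FF k2 (p + PI) = FF k2 p + FF k2 PI.
Proof.
  intros Hk.
  assert (H := const_d0 (fun p => FF k2 (p + PI) - FF k2 p)).
  assert (H0 : forall x, is_derive (fun p => FF k2 (p + PI) - FF k2 p) x 0).
  { intros x. apply (dext _ _ (fe k2 (x + PI) - fe k2 x)).
    apply dminus. apply dshift. apply FF_deriv; auto. apply FF_deriv; auto.
    rewrite fe_shift. ring. }
  specialize (H H0 p 0). simpl in H. rewrite Rplus_0_l, FF_0 in H. lra.
Qed.

Lemma FF_PI k2 : 0 <= k2 < 1 -> FF k2 PI = 2 * FF k2 (PI / 2).
Proof.
  intros Hk.
  assert (H := const_d0 (fun p => FF k2 p + FF k2 (PI - p))).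
  assert (H0 : forall x, is_derive (fun p => FF k2 p + FF k2 (PI - p)) x 0).
  { intros x. apply (dext _ _ (fe k2 x + - fe k2 (PI - x))).
    apply dplus. apply FF_deriv; auto. apply dreflect. apply FF_deriv; auto.
    rewrite fe_refl. ring. }
  specialize (H H0 (PI/2) 0). simpl in H.
  replace (PI - PI/2) with (PI/2) in H by field. rewrite Rminus_0_r, FF_0 in H. lra.
Qed.


Lemma dexp (M x : R) : is_derive (fun t => exp (M * t)) x (M * exp (M * x)).
Proof. auto_derive; auto. ring. Qed.

Lemma uniq (A L : R) (p al X1 Y1 X2 Y2 : R -> R) :
  0 <= A -> 0 <= L ->
  (forall x, Rabs (al x) <= A) ->
  (forall x y, x ^ 2 <= 1 -> y ^ 2 <= 1 -> Rabs (p x - p y) <= L * Rabs (x - y)) ->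
  (forall t, is_derive X1 t (al t * Y1 t)) -> (forall t, is_derive Y1 t (al t * p (X1 t))) ->
  (forall t, is_derive X2 t (al t * Y2 t)) -> (forall t, is_derive Y2 t (al t * p (X2 t))) ->
  (forall t, X1 t ^ 2 <= 1) -> (forall t, X2 t ^ 2 <= 1) -> X1 0 = X2 0 -> Y1 0 = Y2 0 ->
  forall t, X1 t = X2 t.
Proof.
  intros HA HL Hal Hp dX1 dY1 dX2 dY2 B1 B2 E0 F0.
  set (W := fun t => (X1 t - X2 t) * (X1 t - X2 t) + (Y1 t - Y2 t) * (Y1 t - Y2 t)).
  set (W' := fun t => 2 * (X1 t - X2 t) * (al t * Y1 t - al t * Y2 t)
                    + 2 * (Y1 t - Y2 t) * (al t * p (X1 t) - al t * p (X2 t))).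
  assert (dW : forall t, is_derive W t (W' t)).
  { intros t. unfold W, W'.
    eapply dext. apply dplus; apply dmult; apply dminus; eauto. cbv beta. ring. }
  set (M := A * (1 + L)).
  assert (HM : 0 <= M) by (unfold M; apply Rmult_le_pos; lra).
  assert (HW0 : forall t, 0 <= W t).
  { intros t; unfold W; cbv beta. assert (H1 := Rle_0_sqr (X1 t - X2 t)); assert (H2 := Rle_0_sqr (Y1 t - Y2 t)); unfold Rsqr in *; lra. }
  assert (bound : forall t, Rabs (W' t) <= M * W t).
  { intros t. unfold W', W, M; cbv beta.
    set (d := X1 t - X2 t). set (e := Y1 t - Y2 t).
    replace (al t * Y1 t - al t * Y2 t) with (al t * e) by (unfold e; ring).
    replace (al t * p (X1 t) - al t * p (X2 t)) with (al t * (p (X1 t) - p (X2 t))) by ring.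
    assert (Hpd := Hp (X1 t) (X2 t) (B1 t) (B2 t)). fold d in Hpd.
    assert (Ha := Hal t).
    eapply Rle_trans. apply Rabs_triang.
    rewrite !Rabs_mult. rewrite (Rabs_right 2) by lra.
    assert (Hd := Rabs_pos d). assert (He := Rabs_pos e). assert (Hal0 := Rabs_pos (al t)).
    assert (Hq := Rabs_pos (p (X1 t) - p (X2 t))).
    assert (H1 : Rabs (al t) * Rabs (p (X1 t) - p (X2 t)) <= A * (L * Rabs d)).
    { apply Rmult_le_compat; auto. }
    assert (H2 : 2 * Rabs d * Rabs e <= d * d + e * e).
    { assert (Hdd: Rabs d * Rabs d = d * d) by (rewrite <- Rabs_mult; apply Rabs_right; apply Rle_ge; apply Rle_0_sqr).
      assert (Hee: Rabs e * Rabs e = e * e) by (rewrite <- Rabs_mult; apply Rabs_right; apply Rle_ge; apply Rle_0_sqr).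
      assert (Hs := Rle_0_sqr (Rabs d - Rabs e)); unfold Rsqr in Hs. nra. }
    assert (H0 : 0 <= Rabs d * Rabs e) by (apply Rmult_le_pos; auto).
    assert (H3: Rabs d * Rabs e * Rabs (al t) <= Rabs d * Rabs e * A) by (apply Rmult_le_compat_l; auto).
    assert (H4: Rabs e * (Rabs (al t) * Rabs (p (X1 t) - p (X2 t))) <= Rabs e * (A * (L * Rabs d))) by (apply Rmult_le_compat_l; auto).
    assert (H5: A * (1 + L) * (2 * Rabs d * Rabs e) <= A * (1 + L) * (d * d + e * e)) by (apply Rmult_le_compat_l; auto; apply Rmult_le_pos; lra).
    lra. }
  assert (W0 : W 0 = 0) by (unfold W; cbv beta; rewrite E0, F0; ring).
  assert (Wz : forall t, W t = 0).
  { clear Hp Hal dX1 dX2 dY1 dY2 B1 B2. clearbody W W'. intros t.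
    destruct (Rle_or_lt 0 t) as [Ht | Ht].
    - assert (Hd : forall s, is_derive (fun s => 0 - (W s * exp (- M * s))) s
                 (- (W' s * exp (- M * s) + W s * (- M * exp (- M * s))))).
      { intros s. apply (dext _ _ (0 - (W' s * exp (- M * s) + W s * (- M * exp (- M * s))))).
        apply (dminus (fun _ => 0) (fun s => W s * exp (- M * s))). apply dconst.
        apply (dmult W (fun s => exp (- M * s))). apply dW. apply dexp. ring. }
      assert (Hn : forall s, 0 <= - (W' s * exp (- M * s) + W s * (- M * exp (- M * s)))).
      { intros s. assert (E := exp_pos (- M * s)).
        assert (Hb : W' s <= M * W s) by (eapply Rle_trans; [apply Rle_abs | apply bound]).
        replace (- (W' s * exp (- M * s) + W s * (- M * exp (- M * s)))) with
          (exp (- M * s) * (M * W s - W' s)) by ring.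
        apply Rmult_le_pos; lra. }
      assert (H := mono_le _ _ Hd Hn 0 t Ht). cbv beta in H.
      rewrite W0 in H. assert (E := exp_pos (- M * t)). assert (Hw := HW0 t).
      assert (H0 : 0 <= W t * exp (- M * t)) by (apply Rmult_le_pos; lra).
      assert (H1 : W t * exp (- M * t) = 0) by lra.
      apply Rmult_integral in H1. destruct H1; auto. lra.
    - assert (Hd : forall s, is_derive (fun s => W s * exp (M * s)) s
                 (W' s * exp (M * s) + W s * (M * exp (M * s)))).
      { intros s. apply (dmult W (fun s => exp (M * s))). apply dW. apply dexp. }
      assert (Hn : forall s, 0 <= W' s * exp (M * s) + W s * (M * exp (M * s))).
      { intros s. assert (E := exp_pos (M * s)).
        assert (Hb : - W' s <= M * W s) by (eapply Rle_trans; [apply Rle_abs | rewrite Rabs_Ropp; apply bound]).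
        replace (W' s * exp (M * s) + W s * (M * exp (M * s))) with
          (exp (M * s) * (M * W s + W' s)) by ring.
        apply Rmult_le_pos; lra. }
      assert (H := mono_le _ _ Hd Hn t 0 ltac:(lra)). cbv beta in H.
      rewrite W0 in H. assert (E := exp_pos (M * t)). assert (Hw := HW0 t).
      assert (H0 : 0 <= W t * exp (M * t)) by (apply Rmult_le_pos; lra).
      assert (H1 : W t * exp (M * t) = 0) by lra.
      apply Rmult_integral in H1. destruct H1; auto. lra. }
  intros t. specialize (Wz t). unfold W in Wz.
  assert (H1 := Rle_0_sqr (X1 t - X2 t)); assert (H2 := Rle_0_sqr (Y1 t - Y2 t)); unfold Rsqr in *.
  assert (H3 : (X1 t - X2 t) * (X1 t - X2 t) = 0) by lra.
  apply Rmult_integral in H3. destruct H3; lra.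
Qed.


Definition gf (a x : R) : R := sqrt a * cos x / sqrt (sin x ^ 2 + a).
Definition hf (a k2 lam x : R) : R :=
  - lam * sqrt a * (1+a) * sin x * sqrt (1 - k2 * sin x ^ 2) / ((sin x ^ 2 + a) * sqrt (sin x ^2 + a)).

Lemma dg a k2 lam x : 0 < a -> 0 <= k2 < 1 -> 0 < lam ->
  is_derive (gf a) x (fe k2 x / lam * hf a k2 lam x).
Proof.
  intros Ha Hk Hl. unfold gf, hf, fe.
  assert (HS1 : sin x ^ 2 <= 1) by (pose proof (sin2_cos2 x); unfold Rsqr in *; nra).
  assert (HQ: 0 < sin x ^2 + a) by nra.
  assert (HD: 0 < 1 - k2 * sin x ^2) by nra.
  assert (Hr: 0 < sqrt (sin x ^2 + a)) by (apply sqrt_lt_R0; lra).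
  assert (Hr2 := sqrt_sqrt (sin x ^2 + a) ltac:(lra)).
  assert (Hd: 0 < sqrt (1 - k2 * sin x ^2)) by (apply sqrt_lt_R0; lra).
  assert (HCS := sin2_cos2 x). unfold Rsqr in HCS.
  auto_derive.
  - replace (sin x * (sin x * 1)) with (sin x ^2) by ring. repeat split; lra.
  - replace (sin x * (sin x * 1)) with (sin x ^2) by ring.
    set (r := sqrt (sin x ^ 2 + a)) in *. set (S := sin x) in *. set (C := cos x) in *.
    set (sa := sqrt a). set (D := sqrt (1 - k2 * S ^ 2)) in *.
    field_simplify_eq; [| repeat split; lra].
    clearbody r S C sa D.
    assert (HC2 : C^2 = 1 - S^2) by nra.
    replace (r^4) with ((S^2+a)^2) by nra.
    replace (r^3) with ((S^2+a)*r) by nra.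
    replace (r^2) with (S^2+a) by nra.
    replace (C^2) with (1 - S^2) by nra.
    ring.
Qed.

Lemma dh a k2 lam c1 c3 c5 s2 x : 0 < a -> 0 < lam -> 0 <= k2 < 1 -> s2 < 0 ->
  sqrt a ^ 2 = a -> lam ^ 2 * 3 = c5 * a * (1 - s2) ->
  k2 * (a * (1 - s2)) = s2 + a -> 3*c3+2*c5 = 2*c5*(a - s2) ->
  6*c1+3*c3+2*c5 = -2*c5*a*s2 ->
  is_derive (hf a k2 lam) x
  (fe k2 x / lam * (- (c1 * gf a x + c3 * gf a x ^ 3 + c5 * gf a x ^ 5))).
Proof.
intros Ha Hl Hk Hs2 Hsa Hlam Hk2 Hc3 Hc1.
unfold hf, gf, fe.
assert (HS1 : sin x ^ 2 <= 1) by (pose proof (sin2_cos2 x); unfold Rsqr in *; nra).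
assert (HQ: 0 < sin x ^2 + a) by nra.
assert (HD: 0 < 1 - k2 * sin x ^2) by nra.
assert (Hr: 0 < sqrt (sin x ^2 + a)) by (apply sqrt_lt_R0; lra).
assert (Hr2 := sqrt_sqrt (sin x ^2 + a) ltac:(lra)).
assert (Hd: 0 < sqrt (1 - k2 * sin x ^2)) by (apply sqrt_lt_R0; lra).
assert (Hd2 := sqrt_sqrt (1 - k2 * sin x ^2) ltac:(lra)).
assert (HCS := sin2_cos2 x). unfold Rsqr in HCS.
auto_derive.
- replace (sin x * (sin x * 1)) with (sin x ^2) by ring. repeat split; try lra.
  apply Rgt_not_eq; apply Rmult_lt_0_compat; lra.
- replace (sin x * (sin x * 1)) with (sin x ^2) by ring.
  replace (1 + - (k2 * sin x ^2)) with (1 - k2 * sin x ^2) by ring.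
  set (r := sqrt (sin x ^2 + a)) in *. set (S := sin x) in *. set (C := cos x) in *.
  set (sa := sqrt a) in *. set (D := sqrt (1 - k2 * S ^ 2)) in *.
  field_simplify_eq; [| repeat split; lra].
  clearbody r S C sa D.
  assert (Hm: a * (1 - s2) <> 0) by nra.
  assert (Ek : k2 = (s2 + a) / (a * (1 - s2))) by (field_simplify_eq; lra).
  assert (E3 : c3 = (2*c5*(a - s2) - 2*c5)/3) by lra.
  assert (E1 : c1 = (-2*c5*a*s2 - 3*((2*c5*(a - s2) - 2*c5)/3)-2*c5)/6) by lra.
  assert (El : lam^2 = c5 * a * (1 - s2)/3) by lra.
  assert (HC2 : C^2 = 1 - S^2) by nra.
  repeat match goal with
  | |- context [r ^ 4] => replace (r^4) with ((S^2+a)^2) by nra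
  | |- context [r ^ 3] => replace (r^3) with ((S^2+a)*r) by nra
  | |- context [r ^ 2] => replace (r^2) with (S^2+a) by nra
  | |- context [D ^ 2] => replace (D^2) with (1 - k2 * S^2) by nra
  | |- context [D ^ 3] => replace (D^3) with ((1 - k2 * S^2) * D) by nra
  | |- context [sa ^ 5] => replace (sa^5) with (a^2*sa) by (rewrite <- Hsa; ring)
  | |- context [sa ^ 3] => replace (sa^3) with (a*sa) by (rewrite <- Hsa; ring)
  | |- context [sa ^ 2] => replace (sa^2) with a by (rewrite <- Hsa; ring)
  | |- context [C ^ 5] => replace (C^5) with ((C^2)^2*C) by ring
  | |- context [C ^ 3] => replace (C^3) with ((C^2)*C) by ring
  | |- context [C ^ 2] => rewrite HC2
  | |- context [lam ^ 2] => rewrite El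
  end.
  rewrite Ek, E1, E3. field. split; lra.
Qed.

Lemma gf_bound a x : 0 < a -> gf a x ^ 2 <= 1.
Proof.
  intros Ha. unfold gf.
  assert (HS1 : 0 <= sin x ^ 2) by apply pow2_ge_0.
  assert (HQ: 0 < sin x ^2 + a) by nra.
  assert (Hr: 0 < sqrt (sin x ^2 + a)) by (apply sqrt_lt_R0; lra).
  assert (HCS := sin2_cos2 x). unfold Rsqr in HCS.
  replace ((sqrt a * cos x / sqrt (sin x ^ 2 + a)) ^ 2) with
    ((sqrt a)^2 * cos x ^ 2 / (sqrt (sin x ^ 2 + a))^2) by (field; lra).
  rewrite !pow2_sqrt by lra.
  apply Rmult_le_reg_r with (sin x ^ 2 + a); auto.
  unfold Rdiv. rewrite Rmult_assoc, Rinv_l by lra. nra.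
Qed.

Lemma gf_0 a : 0 < a -> gf a 0 = 1.
Proof.
  intros Ha. unfold gf. rewrite sin_0, cos_0.
  replace (0 ^ 2 + a) with a by ring. field. apply Rgt_not_eq, sqrt_lt_R0; auto.
Qed.

Lemma hf_0 a k2 lam : hf a k2 lam 0 = 0.
Proof. unfold hf. rewrite sin_0. unfold Rdiv. ring. Qed.

Lemma gf_sq a x : 0 < a -> gf a x ^ 2 = - a + (- a) * (- a - 1) / (sin x ^ 2 - - a).
Proof.
  intros Ha. unfold gf.
  assert (HS1 : 0 <= sin x ^ 2) by apply pow2_ge_0.
  assert (Hr: 0 < sqrt (sin x ^2 + a)) by (apply sqrt_lt_R0; lra).
  assert (HCS := sin2_cos2 x). unfold Rsqr in HCS.
  replace ((sqrt a * cos x / sqrt (sin x ^ 2 + a)) ^ 2) with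
    ((sqrt a)^2 * cos x ^ 2 / (sqrt (sin x ^ 2 + a))^2) by (field; lra).
  rewrite !pow2_sqrt by lra.
  replace (cos x ^ 2) with (1 - sin x ^ 2) by nra.
  field. lra.
Qed.

Lemma gf_period a x : gf a (x + 2 * PI) = gf a x.
Proof.
  unfold gf. replace (x + 2 * PI) with (x + PI + PI) by ring.
  rewrite !neg_sin, !neg_cos. f_equal; [ring | f_equal; ring].
Qed.


Lemma quad_bound x y : x ^ 2 <= 1 -> y ^ 2 <= 1 -> Rabs (x^2 + x*y + y^2) <= 3.
Proof.
  intros Hx Hy. assert (H1 := Rle_0_sqr (x + y)). assert (H2 := Rle_0_sqr (x - y)).
  unfold Rsqr in *. apply Rabs_le. split; nra.
Qed.

Lemma quart_bound x y : x ^ 2 <= 1 -> y ^ 2 <= 1 ->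
  Rabs (x^4 + x^3*y + x^2*y^2 + x*y^3 + y^4) <= 5.
Proof.
  intros Hx Hy.
  replace (x^4 + x^3*y + x^2*y^2 + x*y^3 + y^4) with (x^2*x^2 + x^2*(x*y) + (x*y)*(x*y) + y^2*(x*y) + y^2*y^2) by ring.
  assert (HP2 : (x*y) * (x*y) <= 1) by (replace (x*y*(x*y)) with (x^2 * y^2) by ring; assert (0 <= x^2) by apply pow2_ge_0; assert (0 <= y^2) by apply pow2_ge_0; nra).
  set (X := x^2) in *. set (Y := y^2) in *. set (P := x * y) in *.
  assert (HX : 0 <= X) by apply pow2_ge_0. assert (HY : 0 <= Y) by apply pow2_ge_0.
  assert (HP : -1 <= P <= 1) by nra.
  clearbody X Y P.
  assert (0 <= X * (1 - P)) by (apply Rmult_le_pos; lra).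
  assert (0 <= X * (1 + P)) by (apply Rmult_le_pos; lra).
  assert (0 <= Y * (1 - P)) by (apply Rmult_le_pos; lra).
  assert (0 <= Y * (1 + P)) by (apply Rmult_le_pos; lra).
  assert (0 <= X * (1 - X)) by (apply Rmult_le_pos; lra).
  assert (0 <= Y * (1 - Y)) by (apply Rmult_le_pos; lra).
  assert (0 <= X * X) by (apply Rmult_le_pos; lra).
  assert (0 <= Y * Y) by (apply Rmult_le_pos; lra).
  assert (0 <= P * P) by apply Rle_0_sqr.
  apply Rabs_le. split; nra.
Qed.

Lemma lip (c1 c3 c5 x y : R) : x ^ 2 <= 1 -> y ^ 2 <= 1 ->
  Rabs ((- (c1 * x + c3 * x ^ 3 + c5 * x ^ 5)) - (- (c1 * y + c3 * y ^ 3 + c5 * y ^ 5)))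
  <= (Rabs c1 + 3 * Rabs c3 + 5 * Rabs c5) * Rabs (x - y).
Proof.
  intros Hx Hy.
  replace ((- (c1 * x + c3 * x ^ 3 + c5 * x ^ 5)) - (- (c1 * y + c3 * y ^ 3 + c5 * y ^ 5)))
    with (- (x - y) * (c1 + c3 * (x^2 + x*y + y^2) + c5 * (x^4 + x^3*y + x^2*y^2 + x*y^3 + y^4))) by ring.
  rewrite Rabs_mult, Rabs_Ropp, Rmult_comm.
  apply Rmult_le_compat_r. apply Rabs_pos.
  eapply Rle_trans. apply Rabs_triang.
  eapply Rle_trans. apply Rplus_le_compat_r. apply Rabs_triang.
  rewrite !Rabs_mult.
  assert (H1 := quad_bound x y Hx Hy). assert (H2 := quart_bound x y Hx Hy).
  assert (H3 := Rabs_pos c3). assert (H4 := Rabs_pos c5).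
  assert (Rabs c3 * Rabs (x ^ 2 + x * y + y ^ 2) <= Rabs c3 * 3) by (apply Rmult_le_compat_l; lra).
  assert (Rabs c5 * Rabs (x ^ 4 + x ^ 3 * y + x ^ 2 * y ^ 2 + x * y ^ 3 + y ^ 4) <= Rabs c5 * 5) by (apply Rmult_le_compat_l; lra).
  lra.
Qed.

Lemma energy (c1 c3 c5 s1 s2 : R) (u v : R -> R) :
  0 < c5 -> s1 < s2 -> s2 < 0 ->
  3 * c3 + 2 * c5 = - 2 * c5 * (s1 + s2) ->
  6 * c1 + 3 * c3 + 2 * c5 = 2 * c5 * s1 * s2 ->
  (forall t, is_derive u t (v t)) ->
  (forall t, is_derive v t (- (c1 * u t + c3 * (u t) ^ 3 + c5 * (u t) ^ 5))) ->
  u 0 = 1 -> v 0 = 0 -> forall t, u t ^ 2 <= 1.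
Proof.
  intros Hc5 H12 H2 E3 E1 Hu Hv Hu0 Hv0.
  set (P1 := fun y : R => c1 * y ^ 2 / 2 + c3 * y ^ 4 / 4 + c5 * y ^ 6 / 6).
  assert (dP1 : forall y, is_derive P1 y (c1 * y + c3 * y ^ 3 + c5 * y ^ 5)).
  { intros y. unfold P1. auto_derive; auto. field. }
  set (En := fun t => P1 (u t) + v t * v t * / 2).
  assert (dE : forall t : R, is_derive En t (0:R)).
  { intros t. unfold En.
    apply (dext _ _ (v t * (c1 * u t + c3 * u t ^ 3 + c5 * u t ^ 5) +
                     ((- (c1 * u t + c3 * (u t) ^ 3 + c5 * (u t) ^ 5) * v t + v t * (- (c1 * u t + c3 * (u t) ^ 3 + c5 * (u t) ^ 5))) * / 2 + v t * v t * 0))).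
    apply (dplus (fun t => P1 (u t)) (fun t => v t * v t * / 2)).
    apply (dcomp P1 u). apply dP1. apply Hu.
    apply (dmult (fun t => v t * v t) (fun _ => / 2)).
    apply (dmult v v); apply Hv. apply dconst. field. }
  intros t.
  assert (H := const_d0 En dE t 0). unfold En, P1 in H. cbv beta in H. rewrite Hu0, Hv0 in H.
  set (s := u t ^ 2).
  assert (Hid : v t ^ 2 * 3 = (1 - s) * (c5 * (s - s1) * (s - s2))).
  { unfold s.
    assert (Ec3 : c3 = (- 2 * c5 * (s1 + s2) - 2 * c5) / 3) by lra.
    assert (Ec1 : c1 = (2 * c5 * s1 * s2 - 3 * c3 - 2 * c5) / 6) by lra.
    rewrite Ec1 in H. rewrite Ec3 in H.
    replace (u t ^ 4) with ((u t ^ 2) ^ 2) in H by ring.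
    replace (u t ^ 6) with ((u t ^ 2) ^ 3) in H by ring.
    set (w := u t ^ 2) in *. lra. }
  destruct (Rle_or_lt s 1) as [|Hs]; auto.
  exfalso.
  assert (0 < c5 * (s - s1) * (s - s2)) by (repeat apply Rmult_lt_0_compat; lra).
  assert (0 <= v t ^ 2) by apply pow2_ge_0.
  nra.
Qed.


Lemma EllF_FF k2 p : 0 <= k2 -> EllF p (sqrt k2) = FF k2 p.
Proof. intros H. unfold EllF, FF, fe. rewrite pow2_sqrt by auto. reflexivity. Qed.

Lemma am_spec k2 s : 0 <= k2 < 1 -> FF k2 (am s (sqrt k2)) = s.
Proof.
  intros Hk. rewrite <- EllF_FF by lra. unfold am.
  apply epsilon_spec. destruct (FF_surj k2 s Hk) as [p Hp]. exists p.
  rewrite EllF_FF by lra. auto.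
Qed.

Lemma am_uniq k2 s p : 0 <= k2 < 1 -> FF k2 p = s -> am s (sqrt k2) = p.
Proof.
  intros Hk H. apply (FF_inj k2); auto. rewrite am_spec; auto.
Qed.

Theorem theorem2 (c1 c3 c5 s1 s2 : R) (u v : R -> R)
  (Hc5 : 0 < c5)
  (HDelta : 0 < 3 * c3 ^ 2 - 4 * c5 * (4 * c1 + c3 + c5))
  (Hh0 : 0 < 6 * c1 + 3 * c3 + 2 * c5)
  (Hs12 : s1 < s2) (Hs2 : s2 < 0)
  (Hr1 : h2 c1 c3 c5 s1 = 0) (Hr2 : h2 c1 c3 c5 s2 = 0)
  (Hu' : forall t, is_derive u t (v t))
  (Hv' : forall t, is_derive v t (- (c1 * u t + c3 * (u t) ^ 3 + c5 * (u t) ^ 5)))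
  (Hu0 : u 0 = 1) (Hv0 : v 0 = 0) :
  let k := sqrt ((s2 - s1) / (s1 * (s2 - 1))) in
  let T := 4 * sqrt 3 / sqrt (c5 * s1 * (s2 - 1)) * EllK k in
  (forall t, (u t) ^ 2 =
     s1 + s1 * (s1 - 1) /
            ((sn (sqrt (c5 * s1 * (s2 - 1) / 3) * t) k) ^ 2 - s1)) /\
  (forall t, u (t + T) = u t) /\
  (forall t, (0 <= t <= T / 4 \/ 3 * T / 4 <= t <= T) -> 0 <= u t) /\
  (forall t, T / 4 < t < 3 * T / 4 -> u t < 0).
Proof.
  intros k T.
  assert (E3 : 3 * c3 + 2 * c5 = - 2 * c5 * (s1 + s2)).
  { assert (H : (s1 - s2) * ((3 * c3 + 2 * c5) + 2 * c5 * (s1 + s2)) = 0).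
    { replace ((s1 - s2) * ((3 * c3 + 2 * c5) + 2 * c5 * (s1 + s2))) with
        (h2 c1 c3 c5 s1 - h2 c1 c3 c5 s2) by (unfold h2; ring).
      rewrite Hr1, Hr2; ring. }
    apply Rmult_integral in H. destruct H; lra. }
  assert (E1 : 6 * c1 + 3 * c3 + 2 * c5 = 2 * c5 * s1 * s2).
  { unfold h2 in Hr1. nra. }
  set (a := - s1).
  assert (Ha : 0 < a) by (unfold a; lra).
  set (k2 := (s2 - s1) / (s1 * (s2 - 1))).
  assert (Hkk : k = sqrt k2) by reflexivity.
  assert (Hpos : 0 < s1 * (s2 - 1)) by nra.
  assert (Ek2 : k2 * (s1 * (s2 - 1)) = s2 - s1) by (unfold k2; field; lra).
  assert (Hk : 0 <= k2 < 1) by (split; nra).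
  set (c := c5 * s1 * (s2 - 1)).
  assert (Hc : 0 < c) by (unfold c; rewrite Rmult_assoc; apply Rmult_lt_0_compat; lra).
  set (lam := sqrt (c / 3)).
  assert (Hl : 0 < lam) by (apply sqrt_lt_R0; lra).
  assert (Hl2 : lam ^ 2 = c / 3) by (unfold lam; rewrite pow2_sqrt; lra).
  set (K := FF k2 (PI / 2)).
  assert (HK : EllK k = K) by (unfold EllK, k, K; apply EllF_FF; lra).
  assert (HT : lam * T = 4 * K).
  { unfold T. rewrite HK. unfold lam.
    assert (Hs3 : sqrt (c / 3) * sqrt 3 = sqrt c).
    { rewrite <- sqrt_mult by lra. f_equal. field. }
    assert (0 < sqrt c) by (apply sqrt_lt_R0; lra).
    fold c. replace (sqrt (c / 3) * (4 * sqrt 3 / sqrt c * K)) with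
      ((sqrt (c / 3) * sqrt 3) * 4 * K / sqrt c) by (field; lra).
    rewrite Hs3. field. lra. }
  set (A := / sqrt (1 - k2) / lam).
  set (L := Rabs c1 + 3 * Rabs c3 + 5 * Rabs c5).
  set (p := fun x => - (c1 * x + c3 * x ^ 3 + c5 * x ^ 5)).
  set (al := fun x => fe k2 x / lam).
  assert (Hub := energy c1 c3 c5 s1 s2 u v Hc5 Hs12 Hs2 E3 E1 Hu' Hv' Hu0 Hv0).
  assert (dFl : forall x, is_derive (fun x => FF k2 x / lam) x (fe k2 x / lam)).
  { intros x. apply (dext _ _ (fe k2 x * / lam + FF k2 x * 0)).
    apply (dmult (FF k2) (fun _ => / lam)). apply FF_deriv; auto. apply dconst. field; lra. }
  assert (Hrep : forall x, u (FF k2 x / lam) = gf a x).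
  { apply (uniq A L p al (fun x => u (FF k2 x / lam)) (fun x => v (FF k2 x / lam))
                 (gf a) (hf a k2 lam)).
    - unfold A. assert (0 < sqrt (1 - k2)) by (apply sqrt_lt_R0; lra).
      apply Rmult_le_pos; left; apply Rinv_0_lt_compat; auto.
    - unfold L. assert (H1 := Rabs_pos c1). assert (H2 := Rabs_pos c3). assert (H3 := Rabs_pos c5). lra.
    - intros x. unfold al, A. assert (H1 := fe_ge1 k2 x Hk). assert (H2 := fe_le k2 x Hk).
      rewrite Rabs_right.
      + unfold Rdiv. apply Rmult_le_compat_r; auto. left; apply Rinv_0_lt_compat; auto.
      + apply Rle_ge. unfold Rdiv. apply Rmult_le_pos. lra. left; apply Rinv_0_lt_compat; auto.
    - intros x y Hx Hy. unfold p, L. apply lip; auto.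
    - intros x. unfold al. apply (dext _ _ ((fe k2 x / lam) * v (FF k2 x / lam))); [| reflexivity].
      apply (dcomp u (fun x => FF k2 x / lam)). apply Hu'. apply dFl.
    - intros x. unfold al, p. apply (dcomp v (fun x => FF k2 x / lam)). apply Hv'. apply dFl.
    - intros x. unfold al. apply dg; auto.
    - intros x. unfold al, p.
      apply (dh a k2 lam c1 c3 c5 s2 x); auto.
      + apply pow2_sqrt; lra.
      + rewrite Hl2. unfold c, a. field.
      + unfold a. replace (- s1 * (1 - s2)) with (s1 * (s2 - 1)) by ring. rewrite Ek2. ring.
      + unfold a. lra.
      + unfold a. lra.
    - intros x. apply Hub.
    - intros x. apply gf_bound; auto.
    - cbv beta. rewrite FF_0. unfold Rdiv. rewrite Rmult_0_l. rewrite Hu0, gf_0; auto.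
    - cbv beta. rewrite FF_0. unfold Rdiv. rewrite Rmult_0_l. rewrite Hv0, hf_0; auto. }
  assert (Hut : forall t, u t = gf a (am (lam * t) k)).
  { intros t. rewrite <- Hrep. rewrite Hkk, am_spec by auto. f_equal. field. lra. }
  assert (FPI : FF k2 PI = 2 * K) by (unfold K; apply FF_PI; auto).
  assert (F3 : FF k2 (3 * (PI / 2)) = 3 * K).
  { replace (3 * (PI / 2)) with (PI / 2 + PI) by field. rewrite FF_shift by auto. fold K. lra. }
  assert (F4 : FF k2 (2 * PI) = 4 * K).
  { replace (2 * PI) with (PI + PI) by ring. rewrite FF_shift by auto. lra. }
  assert (F2pi : forall x, FF k2 (x + 2 * PI) = FF k2 x + 4 * K).
  { intros x. replace (x + 2 * PI) with (x + PI + PI) by ring. rewrite !FF_shift by auto. lra. }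
  assert (F0 := FF_0 k2).
  assert (Hsg1 : forall x, 0 <= cos x -> 0 <= gf a x).
  { intros x Hx. unfold gf.
    assert (0 < sqrt a) by (apply sqrt_lt_R0; lra).
    assert (0 < sqrt (sin x ^ 2 + a)) by (apply sqrt_lt_R0; assert (0 <= sin x ^ 2) by apply pow2_ge_0; lra).
    unfold Rdiv. apply Rmult_le_pos. apply Rmult_le_pos; lra. left; apply Rinv_0_lt_compat; auto. }
  assert (Hsg2 : forall x, cos x < 0 -> gf a x < 0).
  { intros x Hx. unfold gf.
    assert (0 < sqrt a) by (apply sqrt_lt_R0; lra).
    assert (0 < sqrt (sin x ^ 2 + a)) by (apply sqrt_lt_R0; assert (0 <= sin x ^ 2) by apply pow2_ge_0; lra).
    assert (0 < / sqrt (sin x ^ 2 + a)) by (apply Rinv_0_lt_compat; auto).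
    unfold Rdiv. replace (sqrt a * cos x * / sqrt (sin x ^ 2 + a)) with
      (cos x * (sqrt a * / sqrt (sin x ^ 2 + a))) by ring.
    assert (0 < sqrt a * / sqrt (sin x ^ 2 + a)) by (apply Rmult_lt_0_compat; auto).
    nra. }
  assert (Fam : forall t, FF k2 (am (lam * t) k) = lam * t).
  { intros t. rewrite Hkk. apply am_spec; auto. }
  assert (HPI := PI_RGT_0).
  split; [| split; [| split]].
  - intros t. rewrite Hut. unfold sn. rewrite gf_sq by auto. unfold a. rewrite !Ropp_involutive. reflexivity.
  - intros t. rewrite !Hut. rewrite Rmult_plus_distr_l, HT.
    rewrite Hkk.
    rewrite (am_uniq k2 (lam * t + 4 * K) (am (lam * t) (sqrt k2) + 2 * PI)) by (auto; rewrite F2pi, am_spec; auto).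
    apply gf_period.
  - intros t Ht. rewrite Hut. apply Hsg1. assert (Hf := Fam t).
    set (ph := am (lam * t) k) in *.
    destruct Ht as [[Ht1 Ht2] | [Ht1 Ht2]].
    + assert (lam * t <= lam * (T / 4)) by (apply Rmult_le_compat_l; lra).
      assert (0 <= lam * t) by (apply Rmult_le_pos; lra).
      assert (ph <= PI / 2) by (apply (FF_le k2); auto; fold K; lra).
      assert (0 <= ph) by (apply (FF_le k2); auto; lra).
      apply cos_ge_0; lra.
    + assert (lam * t <= lam * T) by (apply Rmult_le_compat_l; lra).
      assert (lam * (3 * T / 4) <= lam * t) by (apply Rmult_le_compat_l; lra).
      assert (ph <= 2 * PI) by (apply (FF_le k2); auto; lra).
      assert (3 * (PI / 2) <= ph) by (apply (FF_le k2); auto; lra).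
      replace ph with ((ph - 2 * PI) + PI + PI) by ring. rewrite !neg_cos, Ropp_involutive.
      apply cos_ge_0; lra.
  - intros t [Ht1 Ht2]. rewrite Hut. apply Hsg2. assert (Hf := Fam t).
    set (ph := am (lam * t) k) in *.
    assert (lam * t < lam * (3 * T / 4)) by (apply Rmult_lt_compat_l; lra).
    assert (lam * (T / 4) < lam * t) by (apply Rmult_lt_compat_l; lra).
    assert (ph < 3 * (PI / 2)) by (apply (FF_lt k2); auto; lra).
    assert (PI / 2 < ph) by (apply (FF_lt k2); auto; fold K; lra).
    apply cos_lt_0; lra.
Qed.
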